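(* If $t,t'\in T^{*,\circ}$ satisfy $t=_{ALD}t'$, then $I(t)=I(t')$ and $J(t)=_{LD}J(t')$, the latter meaning that the sequences $J(t)$ and $J(t')$ have equal lengths and pairwise $LD$-equivalent entries.
   Context: For $n\ge1$, $T_n^*$ (resp. $T_n^\circ$, $T_n^{*,\circ}$) is the set of terms built from variables $x_1,\dots,x_n$ using the binary operator $*$ (resp. $\circ$, resp. both); $T^*=\bigcup_n T_n^*$, $T^{*,\circ}=\bigcup_nT_n^{*,\circ}$, $x$ denotes $x_1$, and $T_1^\circ$ is the set of $\circ$-terms in $x$. $=_{LD}$ is the congruence on $T^*$ generated by all instances of $x*(y*z)=(x*y)*(x*z)$ (LD); $=_{ALD}$ is the congruence on $T^{*,\circ}$ generated by all instances of (LD), $x*(y*z)=(x\circ y)*z$ and $x*(y\circ z)=(x*y)\circ(x*z)$. For a set $S$ with binary operation $*$, $\widehat S$ denotes the finite nonempty sequences over $S$, $\frown$ concatenation, and $\vec s\mathbin{\vec{*}}\vec t=(s_1*\cdots*s_p*t_1,\dots,s_1*\cdots*s_p*t_q)$ ($p,q$ the lengths; parentheses added on the right). For $t\in T^{*,\circ}$, $I(t)\in T_1^\circ$ and $J(t)\in\widehat{T^*}$ are defined inductively: if $t$ is a variable, $(I(t),J(t))=(x,(t))$; if $t=t_1*t_2$, $(I(t),J(t))=(I(t_2),J(t_1)\mathbin{\vec{*}}J(t_2))$; if $t=t_1\circ t_2$, $(I(t),J(t))=(I(t_1)\circ I(t_2),J(t_1)\frown J(t_2))$. *)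

(* Defs.v *)
From Stdlib Require Import List.
Import ListNotations.

Inductive sterm : Type :=
| SVar : nat -> sterm
| SStar : sterm -> sterm -> sterm.

Inductive aterm : Type :=
| AVar : nat -> aterm
| AStar : aterm -> aterm -> aterm
| ACirc : aterm -> aterm -> aterm.

Inductive cterm : Type :=
| CX : cterm
| CCirc : cterm -> cterm -> cterm.

Inductive ld_eq : sterm -> sterm -> Prop :=
| ld_refl : forall t, ld_eq t t
| ld_sym : forall t u, ld_eq t u -> ld_eq u t
| ld_trans : forall t u v, ld_eq t u -> ld_eq u v -> ld_eq t v
| ld_cong : forall t1 t2 u1 u2, ld_eq t1 u1 -> ld_eq t2 u2 ->
    ld_eq (SStar t1 t2) (SStar u1 u2)
| ld_ax : forall x y z,
    ld_eq (SStar x (SStar y z)) (SStar (SStar x y) (SStar x z)).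

Inductive ald_eq : aterm -> aterm -> Prop :=
| ald_refl : forall t, ald_eq t t
| ald_sym : forall t u, ald_eq t u -> ald_eq u t
| ald_trans : forall t u v, ald_eq t u -> ald_eq u v -> ald_eq t v
| ald_cong_star : forall t1 t2 u1 u2, ald_eq t1 u1 -> ald_eq t2 u2 ->
    ald_eq (AStar t1 t2) (AStar u1 u2)
| ald_cong_circ : forall t1 t2 u1 u2, ald_eq t1 u1 -> ald_eq t2 u2 ->
    ald_eq (ACirc t1 t2) (ACirc u1 u2)
| ald_ld : forall x y z,
    ald_eq (AStar x (AStar y z)) (AStar (AStar x y) (AStar x z))
| ald_a2 : forall x y z,
    ald_eq (AStar x (AStar y z)) (AStar (ACirc x y) z)
| ald_a3 : forall x y z,
    ald_eq (AStar x (ACirc y z)) (ACirc (AStar x y) (AStar x z)).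

(* s vec* t = (s_1*...*s_p*t_1, ..., s_1*...*s_p*t_q),
   parentheses added on the right: s_1*(s_2*(...*(s_p*t_j))). *)
Definition vstar (s t : list sterm) : list sterm :=
  map (fun tj => fold_right SStar tj s) t.

Fixpoint I (t : aterm) : cterm :=
  match t with
  | AVar _ => CX
  | AStar _ t2 => I t2
  | ACirc t1 t2 => CCirc (I t1) (I t2)
  end.

Fixpoint J (t : aterm) : list sterm :=
  match t with
  | AVar n => [SVar n]
  | AStar t1 t2 => vstar (J t1) (J t2)
  | ACirc t1 t2 => J t1 ++ J t2
  end.

(* Main.v *)
Require Import Defs.
From Stdlib Require Import List.
Import ListNotations.

Definition F (s : list sterm) (c : sterm) := fold_right SStar c s.

Lemma F2_refl l : Forall2 ld_eq l l.
Proof. induction l; constructor; auto using ld_refl. Qed.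

Lemma F2_sym l m : Forall2 ld_eq l m -> Forall2 ld_eq m l.
Proof. induction 1; constructor; auto using ld_sym. Qed.

Lemma F2_trans l m n : Forall2 ld_eq l m -> Forall2 ld_eq m n -> Forall2 ld_eq l n.
Proof.
  intros H; revert n; induction H; intros n H'; inversion H'; subst; constructor;
  eauto using ld_trans.
Qed.

Lemma F_cong s s' a a' : Forall2 ld_eq s s' -> ld_eq a a' -> ld_eq (F s a) (F s' a').
Proof. induction 1; simpl; intros; auto; apply ld_cong; auto. Qed.

Lemma vstar_cong s s' t t' : Forall2 ld_eq s s' -> Forall2 ld_eq t t' ->
  Forall2 ld_eq (vstar s t) (vstar s' t').
Proof.
  intros Hs Ht; unfold vstar; induction Ht; simpl; constructor; auto.
  apply F_cong; auto.
Qed.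

Lemma F_dist X a b : ld_eq (F X (SStar a b)) (SStar (F X a) (F X b)).
Proof.
  induction X; simpl. apply ld_refl.
  eapply ld_trans. apply ld_cong. apply ld_refl. exact IHX. apply ld_ax.
Qed.

Lemma F_comp X Y c : ld_eq (F X (F Y c)) (F (map (F X) Y) (F X c)).
Proof.
  induction Y; simpl. apply ld_refl.
  eapply ld_trans. apply F_dist. apply ld_cong. apply ld_refl. exact IHY.
Qed.

Theorem lemma1p9 (t t' : aterm) :
  ald_eq t t' -> I t = I t' /\ Forall2 ld_eq (J t) (J t').
Proof.
  induction 1; simpl.
  - split; auto using F2_refl.
  - destruct IHald_eq; split; auto using F2_sym.
  - destruct IHald_eq1, IHald_eq2; split; [congruence| eauto using F2_trans].
  - destruct IHald_eq1, IHald_eq2; split; auto using vstar_cong.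
  - destruct IHald_eq1, IHald_eq2; split; [congruence| auto using Forall2_app].
  - split; auto. unfold vstar. rewrite !map_map.
    induction (J z); simpl; constructor; auto. apply F_comp.
  - split; auto. unfold vstar. rewrite !map_map.
    replace (map (fun x0 => fold_right SStar (fold_right SStar x0 (J y)) (J x)) (J z))
      with (map (fun x0 => fold_right SStar x0 (J x ++ J y)) (J z)).
    apply F2_refl.
    apply map_ext; intros; rewrite fold_right_app; reflexivity.
  - split; auto. unfold vstar. rewrite map_app. apply F2_refl.
Qed.
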